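(* Let $S$ be a germ at $0\in\mathbb{C}^2$ which is a union of finitely many pairwise distinct germs of smooth curves, with desingularization of length $N\ge1$, and let $l$ be a germ of smooth curve at $0$ whose tangent line is distinct from the tangent lines of all branches of $S$ (so that $S\cup l$ has the same sequence of blow-ups $E_1,\dots,E_N$, the same $D_k$, parents, neighbours and proximity matrix $P$, with $\nu(S_1\cup l)=\nu(S_1)+1$, $n_1^{S\cup l}=n_1^S+1$, and $S_k$, $n_k$ unchanged for $k\ge2$). Then: (i) if $\Delta\in\{0,1\}^N$ with $\Delta_1=0$ is such that $\{\mathcal{E}(\Delta),\Delta\}$ is an admissible solution of $(\mathcal{H})$ for $S$, then the same $\Delta$ gives an admissible solution of $(\mathcal{H})$ for $S\cup l$; (ii) if $\nu(S)$ is odd and $\Delta\in\{0,1\}^N$ with $\Delta_1=1$ is such that $\{\mathcal{E}(\Delta),\Delta\}$ is an admissible solution of $(\mathcal{H})$ for $S$, then the same $\Delta$ gives an admissible solution of $(\mathcal{H})$ for $S\cup l$.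
   Context: Setup. Let $S$ be a germ at $0\in\mathbb{C}^2$ of reduced analytic curve. Its desingularization $E=E_1\circ\cdots\circ E_N$ is the sequence of point blow-ups defined as follows: $E_1$ is the blow-up of the origin $c_1=0$; then one successively blows up the points $c$ of the current exceptional divisor at which the germ of the strict transform of $S$ is non-empty and is not a single smooth branch transverse to the exceptional divisor at a regular (non-corner) point of it; the process stops when no such point remains. The blow-ups are numbered $E_1,\dots,E_N$ so that, for $k\ge 2$, $E_k$ is centered at a point $c_k$ of the exceptional divisor of $E_1\circ\cdots\circ E_{k-1}$. $D_k$ denotes the exceptional curve created by $E_k$ (and its strict transforms), and $D=E^{-1}(0)=D_1\cup\dots\cup D_N$. Set $S_1=S$ and, for $k\ge2$, let $S_k$ be the germ at $c_k$ of the strict transform of $S$ by $E_1\circ\cdots\circ E_{k-1}$. $\nu(\cdot)$ denotes the algebraic multiplicity of (a reduced equation of) a germ of curve. $n_k$ is the number of irreducible components of the final strict transform $E^\star S$ that meet $D_k$. The set of parents $\mathfrak{P}(k)$, for $k\ge 2$, is the set of indices $j<k$ such that $c_k$ lies on (the strict transform of) $D_j$; $\mathfrak{P}(1)=\emptyset$. The set of neighbours $\mathfrak{N}(k)$ is the set of $i\neq k$ with $D_i\cap D_k\neq\emptyset$ in the final divisor $D$. The proximity matrix $P=(P_{ij})_{1\le i,j\le N}$ has $P_{ii}=1$, $P_{ij}=-1$ if $i\in\mathfrak{P}(j)$, and $P_{ij}=0$ otherwise; it is invertible. The system $(\mathcal{H})$. For $\Delta\in\{0,1\}^N$ put $\delta_k=\#\{i\in\mathfrak{P}(k):\Delta_i=1\}$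 and $\mathfrak{S}_k(\Delta)=\frac{\nu(S_k)-\delta_k}{2}+\Delta_k$ if $\nu(S_k)-\delta_k$ is even, $\mathfrak{S}_k(\Delta)=\frac{\nu(S_k)-\delta_k}{2}+\frac12$ if odd. The system $(\mathcal{H})$ is $P^{-1}\mathcal{E}=\mathfrak{S}(\Delta)$, with unique solution $\mathcal{E}(\Delta)=P\,\mathfrak{S}(\Delta)\in\mathbb{Z}^N$. A pair $\{\mathcal{E},\Delta\}$ solving $(\mathcal{H})$ is admissible if for every $k$: $\Delta_k=1\Rightarrow\epsilon_k\ge n_k$, and $\Delta_k=0\Rightarrow\epsilon_k\ge 2-\sum_{i\in\mathfrak{N}(k)}\Delta_i$. All these quantities are computed for the curve under consideration ($S$ or $S\cup l$). *)

(* Defs.v *)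
From HB Require Import structures.
From mathcomp Require Import all_boot all_order all_algebra.
From mathcomp Require Import reals complex.
Set Implicit Arguments. Unset Strict Implicit. Unset Printing Implicit Defensive.
Import Order.TTheory GRing.Theory Num.Theory.
Local Open Scope ring_scope.

(* A smooth germ is given by its tangent direction  dir : option C           *)
(*   dir = Some a : the germ is  y = a x + sum_{i>=0} coef i * x^(i+2)        *)
(*   dir = None   : the germ is  x =       sum_{i>=0} coef i * y^(i+2)        *)
(* Every smooth germ at 0 has exactly one such representation, and two       *)
(* germs are equal iff their representations are equal.                      *)
Record sgerm (R : realType) := SGerm { dir : option R[i] ; coef : nat -> R[i] }.

(* Infinitely near points (of the origin) are encoded by the finite sequence *)
(* of affine chart coordinates of the successive centres: [::] is the        *)
(* origin c = 0; q ++ [:: x] is the point of the exceptional curve D_q       *)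
(* created by blowing up q with coordinate x (for |q| = 0, x : option C is   *)
(* a point of P^1; for |q| >= 1, Some a is the point of D_q with affine      *)
(* coordinate a in the chart not containing the previous divisor, and None  *)
(* would be the point at infinity of D_q, i.e. a satellite point).           *)
Definition point (R : realType) := seq (option R[i]).

(* labels of a germ: the successive coordinates of its infinitely near points *)
Definition glab (R : realType) (b : sgerm R) (i : nat) : option R[i] :=
  if i is i'.+1 then Some (coef b i') else dir b.

(* the infinitely near point of b of level m+1 (the origin has level 1) *)
Definition gpoint (R : realType) (b : sgerm R) (m : nat) : point R :=
  mkseq (glab b) m.

Definition passes (R : realType) (b : sgerm R) (p : point R) : bool :=
  p == gpoint b (size p).

Definition curve (R : realType) := seq (sgerm R).

Definition pairwise_distinct (R : realType) (S : curve R) : Prop :=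
  forall i j, (i < j < size S)%N ->
    nth (SGerm None (fun _ => 0%R)) S i <> nth (SGerm None (fun _ => 0%R)) S j.

(* multiplicity nu(S_p) of the germ at p of the strict transform of S: each  *)
(* strict transform of a smooth germ is smooth, so it is the number of      *)
(* germs through p.                                                          *)
Definition mult (R : realType) (S : curve R) (p : point R) : nat :=
  count (fun b => passes b p) S.

(* p is a centre of the desingularization of S: the origin is blown up as    *)
(* soon as S is non-empty; another (free) infinitely near point is blown up  *)
(* iff the strict transform of S there is not a single smooth branch         *)
(* transverse to the exceptional divisor at a regular point of it, i.e.      *)
(* (strict transforms of smooth germs being transverse to the last           *)
(* exceptional curve and passing only through free points) iff at least    *)
(* two germs of S pass through p.                                            *)
Definition blown (R : realType) (S : curve R) (p : point R) : bool :=
  if p is [::] then (0 < mult S p)%N else (1 < mult S p)%N.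

(* c : nat -> point is a numbering c_1, ..., c_N of the centres of the       *)
(* desingularization E = E_1 o ... o E_N of S.                               *)
Definition desing_numbering (R : realType) (S : curve R) (N : nat)
    (c : nat -> point R) : Prop :=
  [/\ c 1%N = [::],
      (forall k, (1 <= k <= N)%N -> blown S (c k)),
      (forall p, blown S p -> exists2 k, (1 <= k <= N)%N & c k = p),
      (forall k k', (1 <= k <= N)%N -> (1 <= k' <= N)%N -> c k = c k' -> k = k')
    & (forall k, (2 <= k <= N)%N ->
         exists2 j, (1 <= j < k)%N & c j = take (size (c k)).-1 (c k))].

(* i \in P(k): c_k lies on (the strict transform of) D_i, i < k.  All        *)
(* centres are free points, so c_k lies only on the curve D_i created by     *)
(* blowing up its immediate predecessor c_i.                                 *)
Definition parent (R : realType) (c : nat -> point R) (i k : nat) : bool :=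
  [&& (1 <= i < k)%N, (0 < size (c k))%N & c i == take (size (c k)).-1 (c k)].

(* i \in N(k): D_i meets D_k in the final divisor D (no satellite point is   *)
(* ever blown up, so this happens iff one centre is the predecessor of the   *)
(* other).                                                                   *)
Definition neighbour (R : realType) (N : nat) (c : nat -> point R) (i k : nat)
  : bool :=
  [&& (1 <= i <= N)%N, i != k & parent c i k || parent c k i].

(* n_k: number of branches of the final strict transform meeting D_k, i.e.   *)
(* branches through c_k whose next infinitely near point is not blown up.    *)
Definition nbr (R : realType) (S : curve R) (c : nat -> point R) (k : nat)
  : nat :=
  count (fun b => passes b (c k) && ~~ blown S (gpoint b (size (c k)).+1)) S.

(* proximity matrix, indices 1..N *)
Definition proxP (R : realType) (c : nat -> point R) (i j : nat) : rat :=
  if i == j then 1 else if parent c i j then -1 else 0.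

Definition deltaH (R : realType) (N : nat) (c : nat -> point R)
    (D : nat -> bool) (k : nat) : nat :=
  count (fun i => parent c i k && D i) (iota 1 N).

Definition frakS (R : realType) (S : curve R) (N : nat) (c : nat -> point R)
    (D : nat -> bool) (k : nat) : rat :=
  let d : int := (mult S (c k))%:Z - (deltaH N c D k)%:Z in
  if ~~ odd `|d|%N then d%:~R / 2 + (D k)%:R else d%:~R / 2 + 1 / 2.

(* E(Delta) = P frak S(Delta), the unique solution of P^-1 E = frak S(Delta) *)
Definition epsH (R : realType) (S : curve R) (N : nat) (c : nat -> point R)
    (D : nat -> bool) (k : nat) : rat :=
  \sum_(1 <= j < N.+1) proxP c k j * frakS S N c D j.

Definition admissible (R : realType) (S : curve R) (N : nat)
    (c : nat -> point R) (D : nat -> bool) : Prop :=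
  forall k, (1 <= k <= N)%N ->
    if D k then (nbr S c k)%:R <= epsH S N c D k
    else 2 - (\sum_(1 <= i < N.+1 | neighbour N c i k) (D i)%:R) <= epsH S N c D k.

(* Main.v *)
Require Import Defs.
From HB Require Import structures.
From mathcomp Require Import all_boot all_order all_algebra.
From mathcomp Require Import reals complex.
From mathcomp Require Import ring lra.
Import Order.TTheory GRing.Theory Num.Theory.

Section Helpers.
Local Open Scope ring_scope.
Variables (R : realType) (S : curve R) (l : sgerm R).
Hypothesis Hdir : forall i, (i < size S)%N -> dir (nth l S i) <> dir l.

Lemma passes_l_mult0 (p : point R) :
  (0 < size p)%N -> passes l p -> mult S p = 0%N.
Proof.
move=> Hp Hl; rewrite /mult; apply/eqP; rewrite eqn0Ngt -has_count.
apply/negP => /(has_nthP l) [i Hi Hbp].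
apply (Hdir i Hi).
move/eqP: Hbp => Hbp; move/eqP: Hl => Hl.
have := congr1 (nth None ^~ 0%N) Hbp.
rewrite {1}Hl /gpoint !nth_mkseq ?size_mkseq //.
Qed.

Lemma mult_rcons (p : point R) : mult (rcons S l) p = (mult S p + passes l p)%N.
Proof. by rewrite /mult -cats1 count_cat /= addn0. Qed.

Lemma blown_rcons (p : point R) :
  (0 < size p)%N -> blown (rcons S l) p = blown S p.
Proof.
case: p => [//|x q] Hp /=; rewrite mult_rcons.
case Hl: (passes l (x :: q)); last by rewrite addn0.
by rewrite passes_l_mult0.
Qed.

Lemma nbr_rcons c k : nbr (rcons S l) c k =
  (nbr S c k + (passes l (c k) && ~~ blown S (gpoint l (size (c k)).+1)))%N.
Proof.
have E : forall b, (passes b (c k) && ~~ blown (rcons S l) (gpoint b (size (c k)).+1))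
  = (passes b (c k) && ~~ blown S (gpoint b (size (c k)).+1)).
  by move=> b; rewrite blown_rcons // size_mkseq.
by rewrite /nbr (eq_count E) -cats1 count_cat /= addn0.
Qed.

Lemma epsH_rcons N c D k : (1 <= N)%N ->
  (forall j, (2 <= j < N.+1)%N -> frakS (rcons S l) N c D j = frakS S N c D j) ->
  epsH (rcons S l) N c D k = epsH S N c D k +
    proxP c k 1 * (frakS (rcons S l) N c D 1 - frakS S N c D 1).
Proof.
move=> HN H; rewrite /epsH !(big_ltn (m:=1%N) (n:=N.+1)) ?ltnS //.
rewrite (eq_big_nat _ _ (F2 := fun j => proxP c k j * frakS S N c D j)); last first.
  by move=> j Hj; rewrite H.
rewrite mulrBr; ring.
Qed.

Lemma frak1 (X : curve R) N (c : nat -> point R) D : c 1%N = [::] ->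
  frakS X N c D 1 = if ~~ odd (mult X [::]) then (mult X [::])%:R / 2 + (D 1%N)%:R
                    else (mult X [::])%:R / 2 + 1 / 2.
Proof.
move=> Hc1.
have Hd : deltaH N c D 1 = 0%N.
  rewrite /deltaH; elim: (iota 1 N) => //= i s ->.
  by rewrite /parent; case: i => [|[|i]].
by rewrite /frakS Hd Hc1 subr0 absz_nat pmulrn.
Qed.

End Helpers.
Arguments passes_l_mult0 {R S l}.
Arguments blown_rcons {R S l}.
Arguments nbr_rcons {R S l}.
Arguments epsH_rcons {R S l}.

Theorem lemma2 (R : realType) (S : curve R) (l : sgerm R) (N : nat)
    (c : nat -> point R) :
  pairwise_distinct S ->
  (1 <= N)%N ->
  desing_numbering S N c ->
  (forall i, (i < size S)%N -> dir (nth l S i) <> dir l) ->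
  (forall D : nat -> bool, D 1%N = false ->
     admissible S N c D -> admissible (rcons S l) N c D) /\
  (forall D : nat -> bool, odd (mult S ([::] : point R)) -> D 1%N = true ->
     admissible S N c D -> admissible (rcons S l) N c D).
Proof.
move=> _ HN [Hc1 Hbl _ Hinj _] Hdir.
have Hpl : forall j, (2 <= j <= N)%N -> passes l (c j) = false.
  move=> j /andP[Hj2 HjN].
  have Hj1 : (1 <= j <= N)%N by rewrite HjN andbT ltnW.
  have Hne : (0 < size (c j))%N.
    case E: (c j) => [|x q] //.
    have := Hinj j 1%N Hj1; rewrite leqnn HN E Hc1 => /(_ isT erefl) Ej.
    by rewrite Ej in Hj2.
  move: (Hbl j Hj1); rewrite /blown.
  case Hl: (passes l (c j)) => //.
  move: Hne Hl; case: (c j) => [//|x q] Hne Hl.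
  by rewrite (passes_l_mult0 Hdir _ Hne Hl).
have Hmult : forall j, (2 <= j <= N)%N -> mult (rcons S l) (c j) = mult S (c j).
  by move=> j Hj; rewrite mult_rcons Hpl // addn0.
have Hfr : forall D j, (2 <= j < N.+1)%N -> frakS (rcons S l) N c D j = frakS S N c D j.
  by move=> D j Hj; rewrite /frakS Hmult.
have Heps := fun D k => epsH_rcons N c D k HN (Hfr D).
have Hprox : forall k, (2 <= k)%N -> proxP c k 1 = 0%R.
  by case=> [|[|k]].
have Hnbr : forall k, (2 <= k <= N)%N -> nbr (rcons S l) c k = nbr S c k.
  by move=> k Hk; rewrite (nbr_rcons Hdir) Hpl // addn0.
have Hpl0 : passes l [::] = true by [].
have Hnbr1 : nbr (rcons S l) c 1 = (nbr S c 1).+1.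
  rewrite (nbr_rcons Hdir) Hc1 Hpl0 /= /blown.
  have Hp : passes l (gpoint l 1) by rewrite /passes size_mkseq.
  by rewrite (passes_l_mult0 Hdir _ _ Hp) ?size_mkseq // addn1.
have Hm1 : mult (rcons S l) [::] = (mult S [::]).+1 by rewrite mult_rcons Hpl0 addn1.
have Hk : forall k, (1 <= k <= N)%N -> k <> 1%N -> (2 <= k <= N)%N.
  move=> k /andP[H1 H2] H3; rewrite H2 andbT ltn_neqAle H1 andbT.
  by apply/eqP => E; apply: H3.
split=> D HD1.
- move=> Had k Hk1; have [Ek|Nk] := eqVneq k 1%N.
  + subst k; have := Had 1%N Hk1; rewrite HD1 Heps /proxP eqxx mul1r => H.
    apply: (le_trans H); rewrite lerDl subr_ge0 !frak1 // Hm1 HD1 /=.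
    have -> : ((mult S [::]).+1%:R : rat) = ((mult S [::])%:R + 1)%R by rewrite -natr1.
    case: (odd _) => /=; lra.
  + have Hk2 := Hk k Hk1 (elimN eqP Nk).
    move: (Had k Hk1); rewrite Heps Hprox ?mul0r ?addr0 ?Hnbr //.
    by case/andP: Hk2.
- move: HD1 => Hodd HD1 Had k Hk1; have [Ek|Nk] := eqVneq k 1%N.
  + subst k; have := Had 1%N Hk1; rewrite HD1 Heps /proxP eqxx mul1r Hnbr1 => H.
    rewrite !frak1 // Hm1 HD1 /= Hodd /=.
    have -> : ((mult S [::]).+1%:R : rat) = ((mult S [::])%:R + 1)%R by rewrite -natr1.
    have -> : ((nbr S c 1).+1%:R : rat) = ((nbr S c 1)%:R + 1)%R by rewrite -natr1.
    move: H; lra.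
  + have Hk2 := Hk k Hk1 (elimN eqP Nk).
    move: (Had k Hk1); rewrite Heps Hprox ?mul0r ?addr0 ?Hnbr //.
    by case/andP: Hk2.
Qed.
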